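(* Let $r\ge 2$ and let $\psi\in C^\infty(\mathbb{R})$ with $\psi''>0$ everywhere. Let $\mathcal{M}_{3,r,\psi}=(\mathbb{R}^{2r+2},g_{3,r,\psi})$, where on $\mathbb{R}^{2r+2}$ with coordinates $(u_1,\dots,u_r,v_1,\dots,v_r,x,y)$ the metric $g_{3,r,\psi}$ has as its only non-zero components (up to symmetry) $g(\partial_x,\partial_y)=1$, $g(\partial_{u_i},\partial_{v_j})=\delta_{ij}$, and $g(\partial_x,\partial_x)=-2u_1v_2-\dots-2u_{r-1}v_r-2\psi(u_r)$. Then $\mathcal{M}_{3,r,\psi}$ is Osserman nilpotent of order $2r$: for every tangent vector $\xi$ the Jacobi operator satisfies $J(\xi)^{2r}=0$, and there exist a point $P_0$ and $\xi_0\in T_{P_0}\mathbb{R}^{2r+2}$ with $J(\xi_0)^{2r-1}\neq 0$.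
   Context: The curvature tensor is $R(a,b,c,d)=g\big((\nabla_a\nabla_b-\nabla_b\nabla_a-\nabla_{[a,b]})c,d\big)$. For a tangent vector $\xi$ at $P$, the Jacobi operator $J(\xi)$ is the linear endomorphism of $T_PM$ characterized by $g(J(\xi)y,z)=R(y,\xi,\xi,z)$ for all $y,z\in T_PM$. *)

(* Defs.v *)
From HB Require Import structures.
From mathcomp Require Import all_boot all_order all_algebra.
From mathcomp Require Import all_classical all_reals all_analysis.
Set Implicit Arguments. Unset Strict Implicit. Unset Printing Implicit Defensive.
Import Order.TTheory GRing.Theory Num.Theory.
Import numFieldNormedType.Exports.
Local Open Scope ring_scope.

(* Points of R^n and tangent-vector components are row vectors 'rV[R]_n.
   A metric is a matrix-valued function  g : 'rV_n -> 'M_n  (g p i j = g(d_i,d_j) at p). *)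

Section Coord.
Variables (R : realType) (n : nat).

Definition ecoord (i : 'I_n) : 'rV[R]_n := delta_mx 0 i.

Definition pderiv (i : 'I_n) (f : 'rV[R]_n -> R) (p : 'rV[R]_n) : R :=
  'D_(ecoord i) f p.

Variable g : 'rV[R]_n -> 'M[R]_n.

(* Christoffel symbols of the Levi-Civita connection:
   nabla_{d_i} d_j = sum_k Gamma^k_{ij} d_k,
   Gamma^k_{ij} = 1/2 sum_l g^{kl} (d_i g_{jl} + d_j g_{il} - d_l g_{ij}). *)
Definition christoffel (p : 'rV[R]_n) (k i j : 'I_n) : R :=
  2^-1 * \sum_(l < n) invmx (g p) k l *
     (pderiv i (fun q => g q j l) p + pderiv j (fun q => g q i l) p
      - pderiv l (fun q => g q i j) p).

(* Components of the curvature endomorphism with the convention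
   R(a,b) = nabla_a nabla_b - nabla_b nabla_a - nabla_[a,b]:
   R(d_i,d_j) d_k = sum_l riem p l i j k d_l. *)
Definition riem (p : 'rV[R]_n) (l i j k : 'I_n) : R :=
  pderiv i (fun q => christoffel q l j k) p
  - pderiv j (fun q => christoffel q l i k) p
  + \sum_(m < n) (christoffel p m j k * christoffel p l i m
                  - christoffel p m i k * christoffel p l j m).

(* The curvature tensor R(a,b,c,d) = g(R(a,b)c, d) at p. *)
Definition curv (p : 'rV[R]_n) (a b c d : 'rV[R]_n) : R :=
  \sum_(i < n) \sum_(j < n) \sum_(k < n) \sum_(l < n) \sum_(s < n)
    a 0 i * b 0 j * c 0 k * d 0 s * riem p l i j k * g p l s.

(* Jacobi operator J(xi) at p, as the matrix acting on column component
   vectors: (J(xi) y)^l = sum_i J l i y^i, where J(xi) y = R(y,xi)xi.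
   Hence g(J(xi) y, z) = R(y, xi, xi, z). *)
Definition jacobi (p xi : 'rV[R]_n) : 'M[R]_n :=
  \matrix_(l, i) \sum_(j < n) \sum_(k < n) xi 0 j * xi 0 k * riem p l i j k.

End Coord.

(* Dimension 2r+2, written (2*r).+2 so that square matrices form a ring.
   Coordinate indices (0-based): u_i  |-> i-1   (i = 1..r),
                                 v_j  |-> r+j-1 (j = 1..r),
                                 x    |-> 2r,   y |-> 2r+1. *)
Definition dimM (r : nat) : nat := (2 * r).+2.

Definition coordM (R : realType) (r : nat) (p : 'rV[R]_(dimM r)) (k : nat) : R :=
  p 0 (inord k).

Definition metric3 (R : realType) (r : nat) (psi : R -> R)
    (p : 'rV[R]_(dimM r)) : 'M[R]_(dimM r) :=
  \matrix_(i, j)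
    let i' := nat_of_ord i in let j' := nat_of_ord j in
    if (((i' == 2 * r) && (j' == (2 * r).+1)) || ((i' == (2 * r).+1) && (j' == 2 * r)))%N
    then 1
    else if (((i' < r) && (j' == i' + r)) || ((j' < r) && (i' == j' + r)))%N
    then 1
    else if ((i' == 2 * r) && (j' == 2 * r))%N
    then (* g(d_x,d_x) = -2 u_1 v_2 - ... - 2 u_{r-1} v_r - 2 psi(u_r) *)
      - 2 * (\sum_(k < r.-1) coordM p k * coordM p (r + k.+1)%N)
      - 2 * psi (coordM p r.-1%N)
    else 0.

Definition smooth_fun (R : realType) (psi : R -> R) : Prop :=
  forall (k : nat) (x : R), derivable (derive1n k psi) x 1.

(* Main.v *)
Require Import Defs.
From HB Require Import structures.
From mathcomp Require Import all_boot all_order all_algebra.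
From mathcomp Require Import all_classical all_reals all_analysis.
From mathcomp Require Import ring lra zify.
Import Order.TTheory GRing.Theory Num.Theory.
Import numFieldNormedType.Exports.
Local Open Scope ring_scope.
Set Implicit Arguments. Unset Strict Implicit. Unset Printing Implicit Defensive.
Local Open Scope ring_scope.

Section Der.
Variables (R : realType) (n : nat).
Implicit Types (p v : 'rV[R]_n) (F G : 'rV[R]_n -> R).

Lemma isd_ext F G p v d : (forall q, F q = G q) -> is_derive p v G d -> is_derive p v F d.
Proof. by move=> e; have -> : F = G by apply/funext. Qed.

Lemma isd_eq F p v d d' : d = d' -> is_derive p v F d -> is_derive p v F d'.
Proof. by move=> ->. Qed.

Lemma isdD F G p v dF dG : is_derive p v F dF -> is_derive p v G dG ->
  is_derive p v (fun q => F q + G q) (dF + dG).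
Proof. move=> h1 h2; exact: (is_deriveD h1 h2). Qed.

Lemma isdB F G p v dF dG : is_derive p v F dF -> is_derive p v G dG ->
  is_derive p v (fun q => F q - G q) (dF - dG).
Proof. move=> h1 h2; exact: (is_deriveB h1 h2). Qed.

Lemma isdM F G p v dF dG : is_derive p v F dF -> is_derive p v G dG ->
  is_derive p v (fun q => F q * G q) (F p * dG + G p * dF).
Proof. move=> h1 h2; exact: (is_deriveM h1 h2). Qed.

Lemma isd_cst (c : R) p v : is_derive p v (fun _ => c) 0.
Proof. exact: is_derive_cst. Qed.

Lemma isdZ (c : R) F p v dF : is_derive p v F dF -> is_derive p v (fun q => c * F q) (c * dF).
Proof.
move=> h; apply: isd_eq (isdM (isd_cst c p v) h); rewrite mulr0 addr0 //.
Qed.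

Lemma isd_sum N (F : 'I_N -> 'rV[R]_n -> R) (dF : 'I_N -> R) p v :
  (forall k, is_derive p v (F k) (dF k)) ->
  is_derive p v (fun q => \sum_(k < N) F k q) (\sum_(k < N) dF k).
Proof.
move=> h; apply: (isd_ext (G := \sum_(k < N) F k) _ (is_derive_sum h)).
by move=> q; rewrite fct_sumE.
Qed.

Lemma isd_coord (j : 'I_1) (m : 'I_n) p v : is_derive p v (fun q => q j m) (v j m).
Proof.
have di : derivable (@id ('rV[R]_n)) p v by apply: derivable_id.
apply: DeriveDef.
  by move/derivable_mxP : di => /(_ j m).
have := derive_mx di; rewrite derive_id => /matrixP/(_ j m); rewrite mxE => <- //.
Qed.

Lemma isd_comp (phi : R -> R) (j : 'I_1) (m : 'I_n) p v :
  derivable phi (p j m) 1 ->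
  is_derive p v (fun q => phi (q j m)) (phi^`()%classic (p j m) * v j m).
Proof.
move=> dphi.
have dc : differentiable (fun q : 'rV[R]_n => q j m) p := differentiable_coord _ _ _.
have dp : differentiable phi (p j m) by apply/derivable1_diffP.
have dcomp : differentiable (phi \o (fun q : 'rV[R]_n => q j m)) p.
  exact: differentiable_comp.
apply: DeriveDef; first exact: diff_derivable.
rewrite (deriveE _ dcomp) diff_comp //= deriv1E //=.
rewrite -(deriveE _ dc) (@derive_val _ _ _ _ _ _ _ (isd_coord j m p v)).
by rewrite mulrC.
Qed.

End Der.

Lemma sum_ind (R : realType) N (c : 'I_N) (F : 'I_N -> R) :
  \sum_(k < N) (k == c)%:R * F k = F c.
Proof.
rewrite (bigD1 c) //= eqxx mul1r big1 ?addr0 // => k /negbTE ->; by rewrite mul0r.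
Qed.

Lemma sum_indr (R : realType) N (c : 'I_N) (F : 'I_N -> R) :
  \sum_(k < N) F k * (k == c)%:R = F c.
Proof. rewrite -(sum_ind c F); apply: eq_bigr => k _; by rewrite mulrC. Qed.

Lemma natr_and (R : realType) (a b : bool) : ((a && b)%:R : R) = a%:R * b%:R.
Proof. by case: a; case: b; rewrite /= ?mulr0 ?mul0r ?mulr1. Qed.

Lemma pow_level (R : realType) N (M : 'M[R]_N.+1) (lv : 'I_N.+1 -> nat) :
  (forall l i, (lv l <= lv i)%N -> M l i = 0) ->
  forall k l i, (M ^+ k) l i != 0 -> (lv i + k <= lv l)%N.
Proof.
move=> hM; elim=> [|k IH] l i.
  rewrite expr0 mxE; case: (eqVneq l i) => [->|]; first by rewrite addn0.
  by rewrite eqxx.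
rewrite exprSr -mulmxE mxE => nz.
case: (leqP (lv i + k.+1) (lv l)) => // hlt; exfalso.
move/eqP: nz; apply; apply: big1 => m _.
case: (eqVneq (M m i) 0) => [->|hm]; first by rewrite mulr0.
case: (eqVneq ((M ^+ k) l m) 0) => [->|hk]; first by rewrite mul0r.
have h1 := IH _ _ hk.
have h2 : (lv i < lv m)%N by rewrite ltnNge; apply: contra hm => h; apply/eqP; exact: hM.
lia.
Qed.

Section Geo.
Variables (R : realType) (r : nat) (psi : R -> R).
Hypothesis hr : (2 <= r)%N.
Hypothesis hsm : smooth_fun psi.
Local Notation n := (dimM r).
Local Notation RV := ('rV[R]_(dimM r)).

Lemma dimME : dimM r = (2*r)%N.+2. Proof. by []. Qed.
Lemma ltnI (i : 'I_n) : (i < (2*r)%N.+2)%N. Proof. exact: ltn_ord. Qed.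
Definition Xi : 'I_n := inord (2*r)%N.
Definition Yi : 'I_n := inord (2*r)%N.+1.
Lemma XiE : (Xi : nat) = (2*r)%N. Proof. by rewrite inordK. Qed.
Lemma YiE : (Yi : nat) = (2*r)%N.+1. Proof. by rewrite inordK. Qed.
Lemma eqXi (i : 'I_n) : (i == Xi) = (i == 2*r :> nat)%N.
Proof. by rewrite -val_eqE /= XiE. Qed.
Lemma eqYi (i : 'I_n) : (i == Yi) = (i == (2*r).+1 :> nat)%N.
Proof. by rewrite -val_eqE /= YiE. Qed.
Lemma XYne : (Xi == Yi) = false. Proof. apply/negbTE; rewrite -val_eqE /=. rewrite XiE YiE; lia. Qed.

Definition sigN (j : nat) : nat :=
  (if (j < r) then (j + r) else if (j < 2*r) then (j - r)
  else if j == 2*r then (2*r).+1 else (2*r))%N.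
Lemma sigN_spec j : ((j < r)%N /\ sigN j = (j + r)%N) \/ ((r <= j < 2*r)%N /\ sigN j = (j - r)%N)
  \/ (j = (2*r)%N /\ sigN j = (2*r)%N.+1) \/ ((2*r < j)%N /\ sigN j = (2*r)%N).
Proof. rewrite /sigN; repeat case: ifP => ?; lia. Qed.
Lemma sigN_lt j : (sigN j < n)%N.
Proof. rewrite dimME; have := sigN_spec j; lia. Qed.
Definition sig (j : 'I_n) : 'I_n := inord (sigN j).
Lemma sigE j : (sig j : nat) = sigN j. Proof. by rewrite inordK // sigN_lt. Qed.
Lemma sigK j : sig (sig j) = j.
Proof. apply: val_inj; rewrite /= !sigE. have hj : (j < (2*r)%N.+2)%N := ltn_ord j.
have := sigN_spec j; have := sigN_spec (sigN j); lia. Qed.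
Lemma sig_eqX j : (sig j == Xi) = (j == Yi).
Proof. rewrite eqXi eqYi sigE; have hj : (j < (2*r)%N.+2)%N := ltn_ord j; have := sigN_spec j; lia. Qed.
Lemma sigX : sig Xi = Yi.
Proof. by apply/eqP; rewrite -sig_eqX sigK. Qed.
Lemma sig_inj (i j : 'I_n) : (sig i == sig j) = (i == j).
Proof. apply/eqP/eqP => [h|->] //; by rewrite -(sigK i) h sigK. Qed.
Lemma sig_eqY j : (sig j == Yi) = (j == Xi).
Proof. by rewrite -sigX sig_inj. Qed.
Lemma eq_sig (i j : 'I_n) : (j == sig i) = (i == sig j).
Proof. apply/eqP/eqP => [->|->]; by rewrite sigK. Qed.

Definition fM (q : RV) : R :=
  - 2 * (\sum_(k < r.-1) coordM q k * coordM q (r + k.+1)) - 2 * psi (coordM q r.-1).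

Lemma gcase (i j : nat) (F : R) : (i < n)%N -> (j < n)%N ->
  (if (((i == 2 * r) && (j == (2 * r).+1)) || ((i == (2 * r).+1) && (j == 2 * r)))%N
    then 1
    else if (((i < r) && (j == i + r)) || ((j < r) && (i == j + r)))%N
    then 1
    else if ((i == 2 * r) && (j == 2 * r))%N then F else 0) =
  (j == sigN i)%:R + ((i == 2*r) && (j == 2*r))%N%:R * F.
Proof.
rewrite dimME => hi hj.
have e1 : (j == sigN i) = ((((i == 2 * r) && (j == (2 * r).+1)) || ((i == (2 * r).+1) && (j == 2 * r))) ||
 (((i < r) && (j == i + r)) || ((j < r) && (i == j + r))))%N.
  rewrite /sigN; repeat (case: ifP => ?); lia.
rewrite e1.
case: ifP => c1 /=.
  have -> : ((i == 2*r) && (j == 2*r))%N = false by lia.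
  by rewrite mul0r addr0.
case: ifP => c2 /=.
  have -> : ((i == 2*r) && (j == 2*r))%N = false by lia.
  by rewrite mul0r addr0.
by case: ifP => c3 /=; rewrite ?mul1r ?mul0r add0r.
Qed.

Lemma gE q (i j : 'I_n) : metric3 psi q i j = (j == sig i)%:R + ((i == Xi) && (j == Xi))%:R * fM q.
Proof.
rewrite /metric3 mxE /= -val_eqE /=. rewrite sigE !eqXi gcase //.
Qed.

Definition Ginv (q : RV) : 'M[R]_n :=
  \matrix_(k, l) ((l == sig k)%:R - ((k == Yi) && (l == Yi))%:R * fM q).

Lemma gGinv q : metric3 psi q *m Ginv q = 1%:M.
Proof.
apply/matrixP => i j; rewrite !mxE.
under eq_bigr => k _ do rewrite gE mxE !natr_and.
have e : forall k : 'I_n, ((k == sig i)%:R + (i == Xi)%:R * (k == Xi)%:R * fM q) *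
     ((j == sig k)%:R - (k == Yi)%:R * (j == Yi)%:R * fM q) =
     (k == sig i)%:R * ((j == sig k)%:R - (k == Yi)%:R * (j == Yi)%:R * fM q) +
     (k == Xi)%:R * ((i == Xi)%:R * fM q * ((j == sig k)%:R - (k == Yi)%:R * (j == Yi)%:R * fM q)).
  by move=> k; ring.
under eq_bigr => k _ do rewrite e.
rewrite big_split /= !sum_ind sigK sigX XYne sig_eqY /= mul0r mul0r subr0 eq_sym.
ring.
Qed.

Lemma invE q : invmx (metric3 psi q) = Ginv q.
Proof.
have h := gGinv q; have [u _] := mulmx1_unit h.
by rewrite -[invmx _]mulmx1 -h mulmxA mulVmx // mul1mx.
Qed.


Lemma isdZr (n' : nat) (c : R) (F : 'rV[R]_n' -> R) p v dF : is_derive p v F dF ->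
  is_derive p v (fun q => F q * c) (dF * c).
Proof.
move=> h; apply: isd_eq (isd_ext _ (isdZ c h)); first by rewrite mulrC.
by move=> q; rewrite mulrC.
Qed.

Definition fdv (v q : RV) : R :=
  - 2 * (\sum_(k < r.-1) (coordM v k * coordM q (r + k.+1) + coordM q k * coordM v (r + k.+1)))
  - 2 * (psi^`()%classic (coordM q r.-1) * coordM v r.-1).

Lemma isd_f p v : is_derive p v fM (fdv v p).
Proof.
rewrite /fM /fdv.
apply: isd_eq; last first.
  apply: isdB; apply: isdZ; last by apply: isd_comp; move: hsm; rewrite /smooth_fun => /(_ 0%N (p 0 (inord r.-1))).
  apply: isd_sum => k; apply: isdM; exact: isd_coord.
rewrite /coordM /=; congr (_ * _ - _ * _); apply: eq_bigr => k _ /=; ring.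
Qed.

Definition fdd (v w q : RV) : R :=
  - 2 * (\sum_(k < r.-1) (coordM v k * coordM w (r + k.+1) + coordM w k * coordM v (r + k.+1)))
  - 2 * (psi^`()^`()%classic (coordM q r.-1) * coordM w r.-1 * coordM v r.-1).

Lemma isd_fd p v w : is_derive p w (fdv v) (fdd v w p).
Proof.
rewrite /fdv /fdd.
apply: isd_eq; last first.
  apply: isdB; apply: isdZ; last first.
    apply: isdZr; apply: isd_comp; by move: hsm; rewrite /smooth_fun => /(_ 1%N (p 0 (inord r.-1))).
  apply: isd_sum => k; apply: isdD; [apply: isdZ | apply: isdZr]; exact: isd_coord.
by [].
Qed.


Lemma fdd_sym v w q : fdd v w q = fdd w v q.
Proof.
rewrite /fdd; congr (_ - _ * _); last by ring.
congr (_ * _); apply: eq_bigr => k _; ring.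
Qed.

Lemma pderivE (i : 'I_n) F p d : is_derive p (ecoord R i) F d -> pderiv i F p = d.
Proof. by move=> h; rewrite /pderiv derive_val. Qed.

Lemma pd_g (i j l : 'I_n) p :
  pderiv i (fun q => metric3 psi q j l) p = ((j == Xi) && (l == Xi))%:R * fdv (ecoord R i) p.
Proof.
apply: pderivE.
apply: isd_eq (isd_ext (fun q => gE q j l) (isdD (isd_cst _ _ _) (isdZ _ (isd_f p _)))).
by rewrite add0r.
Qed.


Lemma coordE (b : 'I_n) m : (m < n)%N -> coordM (ecoord R b) m = (m == b :> nat)%:R.
Proof. by move=> hm; rewrite /coordM /ecoord mxE eqxx /= -val_eqE /= inordK. Qed.

Lemma fdv_XY (b : 'I_n) q : (2*r <= b)%N -> fdv (ecoord R b) q = 0.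
Proof.
move=> hb; have hb' : (b < (2*r)%N.+2)%N := ltn_ord b.
rewrite /fdv coordE; last by rewrite dimME; lia.
have -> : (r.-1 == b :> nat) = false by lia.
rewrite mulr0 mulr0 subr0 big1 ?mulr0 // => k _.
have hk : (k < r.-1)%N := ltn_ord k.
rewrite !coordE; try (rewrite dimME; lia).
have -> : (k == b :> nat) = false by lia.
have -> : ((r + k.+1)%N == b :> nat) = false by lia.
by rewrite !mulr0 mul0r addr0.
Qed.

Lemma fdvX q : fdv (ecoord R Xi) q = 0.
Proof. by apply: fdv_XY; rewrite XiE. Qed.
Lemma fdvY q : fdv (ecoord R Yi) q = 0.
Proof. by apply: fdv_XY; rewrite YiE. Qed.

Definition Gam (k i j : 'I_n) (q : RV) : R :=
  2^-1 * (((j == Xi) && (sig k == Xi))%:R * fdv (ecoord R i) q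
        + ((i == Xi) && (sig k == Xi))%:R * fdv (ecoord R j) q
        - ((i == Xi) && (j == Xi))%:R * fdv (ecoord R (sig k)) q).

Lemma chrE q k i j : christoffel (metric3 psi) q k i j = Gam k i j q.
Proof.
rewrite /christoffel invE /Gam; congr (_ * _).
under eq_bigr => l _ do rewrite !pd_g mxE mulrBl.
rewrite sumrB sum_ind.
have e : forall l : 'I_n, ((k == Yi) && (l == Yi))%:R * fM q *
   (((j == Xi) && (l == Xi))%:R * fdv (ecoord R i) q +
    ((i == Xi) && (l == Xi))%:R * fdv (ecoord R j) q -
    ((i == Xi) && (j == Xi))%:R * fdv (ecoord R l) q) =
  (l == Yi)%:R * ((k == Yi)%:R * fM q *
   (((j == Xi) && (l == Xi))%:R * fdv (ecoord R i) q +
    ((i == Xi) && (l == Xi))%:R * fdv (ecoord R j) q -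
    ((i == Xi) && (j == Xi))%:R * fdv (ecoord R l) q)).
  by move=> l; rewrite natr_and; ring.
under eq_bigr => l _ do rewrite e.
rewrite sum_ind [Yi == Xi]eq_sym XYne !andbF fdvY /= !mul0r !mulr0 !add0r oppr0 mulr0 subr0.
by [].
Qed.


Definition Hm (a b : 'I_n) (p : RV) : R := fdd (ecoord R b) (ecoord R a) p.

Definition DG (a l j k : 'I_n) (p : RV) : R :=
  2^-1 * (((k == Xi) && (sig l == Xi))%:R * Hm a j p
        + ((j == Xi) && (sig l == Xi))%:R * Hm a k p
        - ((j == Xi) && (k == Xi))%:R * Hm a (sig l) p).

Lemma pd_Gam a l j k p : pderiv a (Gam l j k) p = DG a l j k p.
Proof.
apply: pderivE; rewrite /Gam /DG /Hm.
apply: isdZ; apply: isdB; [apply: isdD|]; apply: isdZ; exact: isd_fd.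
Qed.

Ltac simp0 := rewrite /= ?andbF ?andbT ?mul0r ?mulr0 ?addr0 ?add0r ?subr0 ?sub0r ?oppr0 ?mul0r ?mulr0 ?addr0 ?subr0.

Lemma P0 (i j k l m : 'I_n) q : ~~ ((i == Xi) && (j == Xi)) -> Gam m j k q * Gam l i m q = 0.
Proof.
rewrite /Gam; case: (eqVneq i Xi) => [->|hi] /= h.
  rewrite (negbTE h); case: (eqVneq m Yi) => [->|hm].
    rewrite [Yi == Xi]eq_sym XYne fdvY; by simp0; try ring.
  rewrite sig_eqX ?(negbTE hm); by simp0; try ring.
case: (eqVneq m Xi) => [->|hm].
  rewrite sigX [Yi == Xi]eq_sym XYne fdvY; by simp0; try ring.
by simp0; try ring.
Qed.

Lemma riemE p l i j k : riem (metric3 psi) p l i j k = DG i l j k p - DG j l i k p.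
Proof.
rewrite /riem.
have e1 : (fun q => christoffel (metric3 psi) q l j k) = Gam l j k.
  by apply/funext => q; exact: chrE.
have e2 : (fun q => christoffel (metric3 psi) q l i k) = Gam l i k.
  by apply/funext => q; exact: chrE.
rewrite e1 e2 !pd_Gam.
under eq_bigr => m _ do rewrite !chrE.
case hij : ((i == Xi) && (j == Xi)).
  move/andP: hij => [/eqP -> /eqP ->].
  by rewrite big1 ?addr0 // => m _; rewrite subrr.
rewrite big1 ?addr0 // => m _.
rewrite P0 ?hij // P0 ?subrr // andbC hij //.
Qed.


Lemma HmE a b p : Hm a b p =
  -2 * (\sum_(k < r.-1) (((k == b :> nat) && ((r + k.+1)%N == a :> nat))%:R
                       + ((k == a :> nat) && ((r + k.+1)%N == b :> nat))%:R))
  - 2 * (psi^`()^`()%classic (coordM p r.-1) * ((r.-1 == a :> nat) && (r.-1 == b :> nat))%:R).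
Proof.
rewrite /Hm /fdd; congr (_ * _ - _ * _).
  apply: eq_bigr => k _; have hk := ltn_ord k.
  by rewrite !coordE ?natr_and //; rewrite dimME; lia.
by rewrite !coordE ?natr_and; [ring | rewrite dimME; lia ..].
Qed.

Lemma Hzero (a b : 'I_n) p :
  (forall k, (k < r.-1)%N -> ((k == b :> nat) && ((r + k.+1)%N == a :> nat)) = false /\
                             ((k == a :> nat) && ((r + k.+1)%N == b :> nat)) = false) ->
  ((r.-1 == a :> nat) && (r.-1 == b :> nat)) = false -> Hm a b p = 0.
Proof.
move=> hk h0; rewrite HmE h0 big1 ?mulr0 ?subr0 // => k _.
by have [-> ->] := hk k (ltn_ord k); rewrite addr0.
Qed.

Lemma Hm_sym a b p : Hm a b p = Hm b a p.
Proof. by rewrite /Hm fdd_sym. Qed.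

Lemma H_row0 (a b : 'I_n) p : ((a : nat) = r \/ (2*r <= a)%N) -> Hm a b p = 0.
Proof.
move=> ha; have hb := ltnI b; have ha' := ltnI a.
apply: Hzero; last by lia.
move=> k hk; split; lia.
Qed.

Definition lvN (j : nat) : nat :=
  (if j < r then j else if j < 2*r then 3*r - 1 - j else if j == 2*r then 0 else 2*r - 1)%N.
Lemma lvN_spec j : ((j < r)%N /\ lvN j = j) \/ ((r <= j < 2*r)%N /\ lvN j = (3*r - 1 - j)%N)
  \/ (j = (2*r)%N /\ lvN j = 0%N) \/ ((2*r < j)%N /\ lvN j = (2*r - 1)%N).
Proof. rewrite /lvN; repeat case: ifP => ?; lia. Qed.

Lemma H_lv (a l : 'I_n) p : (lvN l <= lvN a)%N -> Hm a (sig l) p = 0.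
Proof.
move=> hle; have hl := ltnI l; have ha := ltnI a.
have sl := sigN_spec l; have la := lvN_spec a; have ll := lvN_spec l.
apply: Hzero; rewrite sigE; last by lia.
move=> k hk; split; lia.
Qed.

Lemma riem_zero p (l i j k : 'I_n) : (lvN l <= lvN i)%N -> DG i l j k p - DG j l i k p = 0.
Proof.
move=> hle; have hl := ltnI l; have hi := ltnI i.
rewrite /DG (Hm_sym j i) (H_lv p hle).
have li := lvN_spec i; have ll := lvN_spec l.
case: (eqVneq (sig l) Xi) => hs.
  have hlY : (l : nat) = (2*r)%N.+1 by apply/eqP; rewrite -eqYi -sig_eqX hs.
  rewrite (@H_row0 i k p); last by lia.
  have -> : (i == Xi) = false by rewrite eqXi; lia.
  by simp0; try ring.
case: (eqVneq i Xi) => hiX.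
  have hsl : (sig l : nat) = r \/ (2*r <= sig l)%N.
    have := sigN_spec l; rewrite sigE; move: hiX => /eqP; rewrite eqXi => /eqP hiX; lia.
  rewrite (Hm_sym j (sig l)) (@H_row0 (sig l) j p hsl).
  by simp0; try ring.
by simp0; try ring.
Qed.


Lemma J_zero p xi (l i : 'I_n) : (lvN l <= lvN i)%N -> jacobi (metric3 psi) p xi l i = 0.
Proof.
move=> h; rewrite mxE big1 // => j _; rewrite big1 // => k _.
by rewrite riemE riem_zero // mulr0.
Qed.

Lemma lvN_lt (i : 'I_n) : (lvN i < 2 * r)%N.
Proof. have := ltnI i; have := lvN_spec i; lia. Qed.

Lemma part1 (p xi : RV) : jacobi (metric3 psi) p xi ^+ (2 * r) = 0.
Proof.
apply/matrixP => l i; rewrite [RHS]mxE.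
case: (eqVneq ((jacobi (metric3 psi) p xi ^+ (2 * r)) l i) 0) => // nz.
have := @pow_level R (2*r).+1 (jacobi (metric3 psi) p xi) (fun i => lvN i) (@J_zero p xi) _ _ _ nz.
move=> h; have h2 : (lvN i + (2*r)%N <= lvN l)%N := h; have := lvN_lt l; lia.
Qed.


Hypothesis hpos : forall t : R, 0 < derive1n 2 psi t.

Local Notation J0 := (jacobi (metric3 psi) (0 : RV) (ecoord R Xi)).

Lemma J0E (l i : 'I_n) : J0 l i = - 2^-1 * Hm i (sig l) 0.
Proof.
rewrite mxE.
have e : forall j k : 'I_n, ecoord R Xi 0 j * ecoord R Xi 0 k * riem (metric3 psi) 0 l i j k
   = (j == Xi)%:R * riem (metric3 psi) 0 l i j k * (k == Xi)%:R.
  by move=> j k; rewrite /ecoord !mxE eqxx /=; ring.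
under eq_bigr => j _ do under eq_bigr => k _ do rewrite e.
under eq_bigr => j _ do rewrite sum_indr.
rewrite sum_ind riemE /DG eqxx (Hm_sym i Xi) !(@H_row0 Xi); try (rewrite XiE; lia).
by simp0; ring.
Qed.

Definition wN (k : nat) : nat := (if k < r then k else 3*r - 1 - k)%N.
Lemma wN_spec k : ((k < r)%N /\ wN k = k) \/ ((r <= k)%N /\ wN k = (3*r - 1 - k)%N).
Proof. rewrite /wN; case: ifP => ?; lia. Qed.

Definition ck (k : nat) : R := if k == r.-1 then psi^`()^`()%classic (coordM (0 : RV) r.-1) else 1.

Lemma ck_neq0 k : ck k != 0.
Proof. rewrite /ck; case: ifP => _; last exact: oner_neq0. exact: lt0r_neq0 (hpos _). Qed.

Lemma sum_eqn (N c : nat) (F : nat -> R) : (c < N)%N ->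
  \sum_(k < N) ((k : nat) == c)%:R * F k = F c.
Proof.
move=> hc; rewrite (bigD1 (Ordinal hc)) //= eqxx mul1r big1 ?addr0 // => k hk.
have -> : ((k : nat) == c) = false; last by rewrite mul0r.
by apply/negbTE; apply: contra hk => /eqP e; apply/eqP/val_inj.
Qed.

Lemma eq_sigN_lo (x : nat) (l : 'I_n) : (x < r)%N -> (x == sigN l) = ((l : nat) == x + r)%N.
Proof. move=> hx; have hl := ltnI l; have := sigN_spec l; lia. Qed.

Lemma Hchain k (l : 'I_n) : (k < (2*r).-1)%N ->
  Hm (inord (wN k)) (sig l) 0 = -2 * ck k * ((l : nat) == wN k.+1)%:R.
Proof.
move=> hk; have hl := ltnI l.
have hw : (inord (wN k) : 'I_n) = wN k :> nat.
  by rewrite inordK //; change (wN k < (2*r)%N.+2)%N; have := wN_spec k; lia.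
rewrite HmE sigE hw /ck.
have e1 : forall k' : 'I_r.-1, ((k' : nat) == sigN l) = ((l : nat) == k' + r)%N.
  by move=> k'; rewrite eq_sigN_lo //; have := ltn_ord k'; lia.
have e2 : forall k' : 'I_r.-1, ((r + k'.+1)%N == sigN l) = ((l : nat) == k'.+1)%N.
  move=> k'; have := ltn_ord k'; have := sigN_spec l; lia.
under eq_bigr => k' _ do rewrite e1 e2.
rewrite [r.-1 == sigN l]eq_sigN_lo; last by lia.
case: (ltnP k r.-1) => hk1.
  have -> : wN k = k by rewrite /wN; case: ifP; lia.
  have -> : wN k.+1 = k.+1 by rewrite /wN; case: ifP; lia.
  rewrite (_ : (r.-1 == k) = false); last by lia.
  rewrite (_ : k == r.-1 = false); last by lia.
  rewrite (eq_bigr (fun k' : 'I_r.-1 => ((k' : nat) == k)%:R * ((l : nat) == k.+1)%:R)); last first.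
    move=> k' _; have hk' := ltn_ord k'; rewrite -natrD -natrM; congr (_%:R); lia.
  rewrite (sum_eqn (fun _ => ((l : nat) == k.+1)%:R)) //.
  by simp0; ring.
case: (eqVneq k r.-1) => [hkr|hkr].
  have -> : wN k = r.-1 by rewrite /wN; case: ifP; lia.
  have -> : wN k.+1 = (2*r - 1)%N by rewrite /wN; case: ifP; lia.
  rewrite big1 => [|k' _]; last first.
    have hk' := ltn_ord k'; rewrite -natrD; apply/eqP; rewrite pnatr_eq0; apply/eqP; lia.
  rewrite eqxx (_ : ((l : nat) == r.-1 + r) = ((l : nat) == (2*r - 1)%N)); last by lia.
  by simp0; ring.
have [m [hm e3 e4]] : exists m, [/\ (m < r.-1)%N, wN k = (r + m.+1)%N & wN k.+1 = (r + m)%N].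
  exists (2*r - 2 - k)%N; split; first lia.
    by rewrite /wN; case: ifP; lia.
  by rewrite /wN; case: ifP; lia.
rewrite e3 e4; clear e1 e2 e3 e4 hw.
rewrite (_ : (r.-1 == (r + m.+1)%N) = false); last by lia.
rewrite (eq_bigr (fun k' : 'I_r.-1 => ((k' : nat) == m)%:R * ((l : nat) == (r + m)%N)%:R)); last first.
  move=> k' _; have hk' := ltn_ord k'; rewrite -natrD -natrM; congr (_%:R); lia.
rewrite (sum_eqn (fun _ => ((l : nat) == (r + m)%N)%:R)) //.
by simp0; ring.
Qed.

Definition ev (k : nat) : 'cV[R]_n := delta_mx (inord (wN k)) 0.

Lemma J0col k : (k < (2*r).-1)%N -> J0 *m ev k = ck k *: ev k.+1.
Proof.
move=> hk; apply/matrixP => l z; rewrite (ord1 z) /ev mxE [RHS]mxE [delta_mx _ _ l 0]mxE.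
under eq_bigr => m _ do rewrite [X in _ * X]mxE eqxx andbT.
rewrite sum_indr J0E Hchain // eqxx andbT.
have -> : (l == inord (wN k.+1)) = ((l : nat) == wN k.+1).
  rewrite -val_eqE /= inordK //; change (wN k.+1 < (2*r)%N.+2)%N; have := wN_spec k.+1; lia.
by field.
Qed.

Lemma chain k : (k <= (2*r).-1)%N -> exists c : R, c != 0 /\ J0 ^+ k *m ev 0 = c *: ev k.
Proof.
elim: k => [|k IH] hk.
  by exists 1; split; [exact: oner_neq0 | rewrite expr0 mul1mx scale1r].
have [c [c0 e]] := IH (ltnW hk).
exists (c * ck k); split; first by rewrite mulf_neq0 // ck_neq0.
by rewrite exprS -mulmxE -mulmxA e -scalemxAr J0col // scalerA.
Qed.

Lemma part2 : J0 ^+ (2 * r).-1 != 0.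
Proof.
have [c [c0 e]] := chain (leqnn _).
apply/negP => /eqP h; move: e; rewrite h mul0mx => /matrixP/(_ (inord (wN (2*r).-1)) 0).
rewrite !mxE eqxx /= mulr1 => /esym/eqP; by rewrite (negbTE c0).
Qed.

End Geo.

Theorem theorem1p6 (R : realType) (r : nat) (psi : R -> R) :
  (2 <= r)%N ->
  smooth_fun psi ->
  (forall t : R, 0 < derive1n 2 psi t) ->
  (forall p xi : 'rV[R]_(dimM r),
      jacobi (metric3 psi) p xi ^+ (2 * r) = 0) /\
  (exists p0 xi0 : 'rV[R]_(dimM r),
      jacobi (metric3 psi) p0 xi0 ^+ (2 * r).-1 != 0).
Proof.
move=> hr hsm hpos; split.
  by move=> p xi; apply: part1.
exists 0, (ecoord R (Xi r)); exact: part2.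
Qed.
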